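(* Let $n\ge2$, $g,h\in H_n\rtimes S_n$ and $r\in\mathbb{N}$, and let $j^1,\dots,j^u$ be representatives of $I^c_r(g)$. If $x_1,x_2\in H_n$ both satisfy $x_1^{-1}gx_1=h$ and $x_2^{-1}gx_2=h$, then $\sum_{s=1}^u t_{j^s}(x_1)=\sum_{s=1}^u t_{j^s}(x_2)$.
   Context: $\mathbb{N}=\{1,2,\dots\}$, $X_n=\{1,\dots,n\}\times\mathbb{N}$, permutations act on the right. $H_n$ is the group of bijections $g$ of $X_n$ with $z_i(g)\in\mathbb{N}$, $t_i(g)\in\mathbb{Z}$ such that $(i,m)g=(i,m+t_i(g))$ for all $m\ge z_i(g)$. $S_n$ acts by $(i,m)\sigma=(i\sigma,m)$; $H_n\rtimes S_n\le\mathrm{Sym}(X_n)$ is generated by $H_n$ and these; each $g$ is uniquely $\omega_g\sigma_g$ with $\omega_g\in H_n$, $\sigma_g\in S_n$, $t_i(g):=t_i(\omega_g)$. $[i]_g$ is the orbit of $i$ under $\langle\sigma_g\rangle$, $|[i]_g|$ its size, $t_{[i]}(g)=\sum_{k\in[i]_g}t_k(g)$, $I^c(g)=\{i: t_{[i]}(g)=0\}$, and $I^c_r(g)=\{j\in I^c(g): |[j]_g|=r\}$. Representatives $j^1,\dots,j^u$ of $I^c_r(g)$ are elements such that $I^c_r(g)=[j^1]_g\sqcup\dots\sqcup[j^u]_g$ (disjoint union). *)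

(* Defs.v *)
From mathcomp Require Import all_boot all_order all_algebra all_fingroup.
Set Implicit Arguments. Unset Strict Implicit. Unset Printing Implicit Defensive.
Import GRing.Theory Num.Theory.

(* X_n = {1..n} x N, encoded as 'I_n * nat (both coordinates shifted by -1;
   this is an order-preserving relabelling, so nothing changes). *)
Definition X (n : nat) : Type := ('I_n * nat)%type.

Definition Hn_trans (n : nat) (w : X n -> X n) (t : 'I_n -> int) : Prop :=
  forall i : 'I_n, exists z : nat, forall m : nat, (z <= m)%N ->
    (w (i, m)).1 = i /\ ((w (i, m)).2%:Z = m%:Z + t i)%R.

Definition in_Hn (n : nat) (w : X n -> X n) : Prop :=
  bijective w /\ exists t : 'I_n -> int, Hn_trans w t.

Definition permX (n : nat) (s : {perm 'I_n}) (p : X n) : X n := (s p.1, p.2).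

(* g = w * s  (right actions: first w, then s), with w in H_n, s in S_n *)
Definition HS_decomp (n : nat) (g w : X n -> X n) (s : {perm 'I_n}) : Prop :=
  in_Hn w /\ forall p : X n, g p = permX s (w p).

Definition tclass (n : nat) (s : {perm 'I_n}) (t : 'I_n -> int) (i : 'I_n) : int :=
  (\sum_(k in porbit s i) t k)%R.

Definition Ic (n : nat) (s : {perm 'I_n}) (t : 'I_n -> int) : {set 'I_n} :=
  [set i | tclass s t i == 0%R].

Definition Icr (n : nat) (s : {perm 'I_n}) (t : 'I_n -> int) (r : nat) : {set 'I_n} :=
  [set j in Ic s t | #|porbit s j| == r].

Definition representatives (n : nat) (s : {perm 'I_n}) (A : {set 'I_n})
    (js : seq 'I_n) : Prop :=
  A = \bigcup_(j <- js) porbit s j /\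
  pairwise (fun a b => [disjoint porbit s a & porbit s b]) js.

(* Main.v *)
Require Import Defs.
From mathcomp Require Import all_boot all_order all_algebra all_fingroup zify.
Import GRing.Theory Num.Theory.
Set Implicit Arguments. Unset Strict Implicit.

Lemma rowcount (P : nat -> bool) (Z K M : nat) :
  (Z <= K)%N -> (K <= M)%N -> (forall m, (Z <= m)%N -> P m) ->
  (\sum_(m < M) (P m && (m < K)) = \sum_(m < Z) P m + (K - Z))%N.
Proof.
move=> hZK hKM hP.
rewrite -(big_mkord xpredT (fun m => ((P m && (m < K)%N) : nat))) /=.
rewrite (@big_cat_nat _ _ _ K 0 M _ _ (leq0n K) hKM) /=.
rewrite [X in (_ + X)%N]big_nat_cond [X in (_ + X)%N]big1 ?addn0; last first.
  move=> m /andP[/andP[h1 _] _]; rewrite ltnNge h1 andbF //.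
rewrite big_nat_cond (eq_bigr (fun m => (P m : nat))); last first.
  by move=> m /andP[/andP[_ ->] _]; rewrite andbT.
rewrite -big_nat_cond (@big_cat_nat _ _ _ Z 0 K _ _ (leq0n Z) hZK) /= big_mkord.
congr (_ + _)%N.
rewrite (eq_big_nat _ _ (F2 := fun=> 1%N)); last by move=> m /andP[h _]; rewrite hP.
by rewrite sum_nat_const_nat muln1.
Qed.

Lemma cardS2 n M (P : 'I_n -> nat -> bool) :
  #|[set p : 'I_n * 'I_M | P p.1 (val p.2)]| = (\sum_i \sum_(m < M) P i m)%N.
Proof.
rewrite (pair_bigA _ (fun i (m : 'I_M) => (P i (val m) : nat))) /= -sum1_card big_mkcond /=.
by apply: eq_bigr => p _; rewrite inE; case: (P _ _).
Qed.


Lemma flux n (S : pred (X n)) (f : X n -> X n) (R : {set 'I_n}) (t : 'I_n -> int) :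
  injective f -> (forall p, S p -> S (f p)) ->
  (forall q, S q -> exists2 p, S p & f p = q) ->
  (forall i, exists z, forall m, (z <= m)%N -> S (i,m) = (i \in R)) ->
  Hn_trans f t ->
  (\sum_(i in R) t i = 0)%R.
Proof.
move=> finj fS fSs hS ht.
have [zS hzS] := fin_all_exists hS.
have [zf hzf] := fin_all_exists ht.
pose Z := (\max_i (zS i + zf i))%N.
have hZS i : (zS i <= Z)%N.
  by have := @leq_bigmax _ (fun i => zS i + zf i)%N i; rewrite /Z /=; lia.
have hZf i : (zf i <= Z)%N.
  by have := @leq_bigmax _ (fun i => zS i + zf i)%N i; rewrite /Z /=; lia.
pose T := (\max_i `|t i|%N)%N.
have hT i : (`|t i| <= T)%N by apply: (@leq_bigmax _ (fun i => `|t i|%N)).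
have hT1 i : (- T%:Z <= t i)%R by have := hT i; lia.
have hT2 i : (t i <= T%:Z)%R by have := hT i; lia.
pose W := (\max_(p : 'I_n * 'I_Z) (f (p.1, val p.2)).2)%N.
have hW i m : (m < Z)%N -> ((f (i,m)).2 <= W)%N.
  by move=> hm; apply: (@leq_bigmax _ (fun p : 'I_n * 'I_Z => (f (p.1, val p.2)).2) (i, Ordinal hm)).
pose N := (Z + T + W + 1)%N.
pose t' i := if i \in R then t i else 0%R.
have ht'1 i : (- T%:Z <= t' i)%R by rewrite /t'; case: (i \in R) => //; lia.
have ht'2 i : (t' i <= T%:Z)%R by rewrite /t'; case: (i \in R) => //; lia.
have fwd i m : S (i,m) -> (m < N)%N -> (((f (i,m)).2)%:Z < N%:Z + t' (f (i,m)).1)%R.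
  move=> Sim mN; case: (leqP Z m) => hm.
    have iR : i \in R by rewrite -(hzS i m) // (leq_trans (hZS i) hm).
    have [e1 e2] := hzf i m (leq_trans (hZf i) hm).
    rewrite e1 e2 /t' iR; lia.
  have := hW i m hm; have := ht'1 (f (i,m)).1; rewrite /N; lia.
pose M := (N + T).+1.
have fwdM i m : S (i,m) -> (m < N)%N -> ((f (i,m)).2 < M)%N.
  move=> Sim mN; have := fwd i m Sim mN; have := ht'2 (f (i,m)).1; rewrite /M; lia.
have bwd i k : S (i,k) -> (k%:Z < N%:Z + t' i)%R ->
    exists2 p, S p /\ (p.2 < N)%N & f p = (i,k).
  move=> Sik hk; have [[i0 m] Sp fp] := fSs _ Sik.
  exists (i0,m) => //; split => //=.
  case: (leqP Z m) => hm; last by rewrite /N; lia.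
  have iR : i0 \in R by rewrite -(hzS i0 m) // (leq_trans (hZS i0) hm).
  have [e1 e2] := hzf i0 m (leq_trans (hZf i0) hm).
  rewrite fp /= in e1 e2; subst i0.
  move: hk; rewrite /t' iR e2; lia.
pose A := [set p : 'I_n * 'I_M | S (p.1, val p.2) && (val p.2 < N)%N].
pose B := [set p : 'I_n * 'I_M | S (p.1, val p.2) && ((val p.2)%:Z < N%:Z + t' p.1)%R].
pose F (p : 'I_n * 'I_M) : 'I_n * 'I_M := ((f (p.1, val p.2)).1, inord (f (p.1, val p.2)).2).
have FAB : F @: A = B.
  apply/setP => q; apply/imsetP/idP.
    case=> [[i m] pA ->]; move: pA; rewrite !inE /= => /andP[Sim mN].
    rewrite inordK ?fwdM //.
    by rewrite -surjective_pairing fS //= fwd.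
  case: q => qi qm; rewrite inE /= => /andP[Sq hq].
  have [[i0 m] [Sp mN] fp] := bwd _ _ Sq hq.
  have mM : (m < M)%N by rewrite /M /= in mN *; lia.
  exists (i0, Ordinal mM); first by rewrite inE /= Sp.
  rewrite /F /= fp /=; congr pair.
  by apply/val_inj; rewrite /= inordK.
have Finj : {in A &, injective F}.
  move=> [i1 m1] [i2 m2]; rewrite !inE /= => /andP[S1 h1] /andP[S2 h2].
  rewrite /F /= => /eqP; rewrite xpair_eqE => /andP[/eqP e1 /eqP e2].
  have e2' : (f (i1, val m1)).2 = (f (i2, val m2)).2.
    by move: (congr1 val e2); rewrite /= !inordK ?fwdM.
  have := finj (i1, val m1) (i2, val m2).
  rewrite [f (i1, _)]surjective_pairing [f (i2, _)]surjective_pairing e1 e2'.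
  move=> /(_ erefl) [-> /val_inj ->] //.
have cardAB : #|A| = #|B| by rewrite -FAB card_in_imset.
move: cardAB; rewrite /A /B (@cardS2 _ _ (fun i m => S (i,m) && (m < N)%N))
  (@cardS2 _ _ (fun i m => S (i,m) && (m%:Z < N%:Z + t' i)%R)).
move=> cardAB.
have row i : (((\sum_(m < M) (S (i,val m) && ((val m)%:Z < N%:Z + t' i)%R))%N)%:Z
     = ((\sum_(m < M) (S (i,val m) && (val m < N)%N))%N)%:Z + t' i)%R.
  rewrite /t'; case: ifP => iR; last first.
    congr Posz; rewrite ?addn0; apply: eq_bigr => m _; congr nat_of_bool; congr andb; lia.
  pose K := absz (Posz N + t i)%R.
  have hK : (K%:Z = N%:Z + t i)%R by rewrite /K; have := hT1 i; rewrite /N; lia.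
  have hP m : (Z <= m)%N -> S (i,m) by move=> hm; rewrite (hzS i m) ?(leq_trans (hZS i)).
  rewrite (eq_bigr (fun m : 'I_M => (S (i, val m) && (val m < K)%N) : nat)); last first.
    by move=> m _; rewrite -hK ltz_nat.
  rewrite (@rowcount (fun m => S (i,m)) Z) //; last 2 first.
  - by have := hT1 i; rewrite /K /N; lia.
  - by have := hT2 i; rewrite /K /M; lia.
  rewrite (@rowcount (fun m => S (i,m)) Z) //; last by rewrite /M /N; lia.
  - move: hK; have := hT1 i; rewrite /N; lia.
  - rewrite /N; lia.
have : (\sum_i t' i = 0)%R.
  have e := congr1 Posz cardAB.
  rewrite !(big_morph Posz PoszD (erefl (Posz 0))) in e.
  rewrite (eq_bigr _ (fun i _ => row i)) big_split /= in e.
  by move/eqP: e; rewrite eq_sym -subr_eq0 addrAC subrr add0r => /eqP.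
by move=> h; rewrite big_mkcond; exact: h.
Qed.


Section Orb.
Variables (n : nat) (s : {perm 'I_n}) (i : 'I_n).
Let o := #|porbit s i|.

Lemma o_gt0 : (0 < o)%N.
Proof. by rewrite lt0n card_porbit_neq0. Qed.

Lemma L1 : iter o s i = i.
Proof. exact: iter_porbit. Qed.

Lemma L2 k : (0 < k < o)%N -> iter k s i != i.
Proof.
move=> /andP[k0 ko].
have U := uniq_traject_porbit s i.
have := nth_uniq i (s := traject s i o) (i := k) (j := 0).
rewrite size_traject => /(_ ko o_gt0 U).
by rewrite !nth_traject // ?o_gt0 // => ->; rewrite -lt0n k0.
Qed.

Lemma L3 q l : iter (q * o + l) s i = iter l s i.
Proof.
elim: q => [|q IH]; first by rewrite mul0n add0n.
by rewrite mulSn -addnA iterD IH -iterD addnC iterD L1.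
Qed.

Lemma L3' q : iter (q * o) s i = i.
Proof. by have := L3 q 0; rewrite addn0. Qed.

Lemma L4 k : iter k s i = i -> (o %| k)%N.
Proof.
move=> hk; rewrite /dvdn; apply/negPn/negP => hne.
have := @L2 (k %% o); rewrite lt0n hne ltn_mod o_gt0 /= => /(_ isT).
by rewrite -(L3 (k %/ o)) -divn_eq hk eqxx.
Qed.

Lemma L5 (F : 'I_n -> int) q :
  (\sum_(l < q * o) F (iter l s i) = (\sum_(l < o) F (iter l s i)) *+ q)%R.
Proof.
elim: q => [|q IH]; first by rewrite mul0n big_ord0 mulr0n.
rewrite mulSn big_split_ord /= mulrS -IH; congr (_ + _)%R.
by apply: eq_bigr => l _ /=; rewrite -{1}(mul1n o) L3.
Qed.

Lemma L6 (F : 'I_n -> int) : tclass s F i = (\sum_(l < o) F (iter l s i))%R.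
Proof.
rewrite /tclass (eq_bigl (fun k => k \in traject s i o)); last first.
  by move=> k; rewrite porbit_traject.
rewrite -big_uniq ?uniq_traject_porbit //.
rewrite /o; elim: #|porbit s i| => [|k IH]; first by rewrite big_nil big_ord0.
by rewrite trajectSr -cats1 big_cat /= IH big_ord_recr /= big_cons big_nil addr0.
Qed.

End Orb.


Definition ev n (f : X n -> X n) (s : 'I_n -> 'I_n) (t : 'I_n -> int) :=
  forall i, exists z, forall m, (z <= m)%N ->
    (f (i,m)).1 = s i /\ ((f (i,m)).2%:Z = m%:Z + t i)%R.

Lemma ev_comp n (f g : X n -> X n) s1 s2 t1 t2 :
  ev f s1 t1 -> ev g s2 t2 ->
  ev (fun p => g (f p)) (fun i => s2 (s1 i)) (fun i => t1 i + t2 (s1 i))%R.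
Proof.
move=> hf hg i.
have [z1 h1] := hf i; have [z2 h2] := hg (s1 i).
exists (z1 + z2 + `|t1 i|)%N => m hm.
have [e1 e2] := h1 m (leq_trans (leq_addr _ _) (leq_trans (leq_addr _ _) hm)).
rewrite [f (i,m)]surjective_pairing e1.
have [e3 e4] := h2 (f (i,m)).2 ltac:(move: e2 hm; lia).
by rewrite e3 e4 e2 addrA.
Qed.

Lemma ev_iter n (g : X n -> X n) s t : ev g s t ->
  forall k, ev (iter k g) (iter k s) (fun i => \sum_(l < k) t (iter l s i))%R.
Proof.
move=> hg; elim=> [|k IH].
  by move=> i; exists 0%N => m _; rewrite big_ord0 addr0.
move=> i; have [z h] := ev_comp IH hg i.
exists z => m hm; have [e1 e2] := h m hm.
by rewrite /= e1 e2 big_ord_recr.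
Qed.

Lemma ev_id n (f : X n -> X n) t : Hn_trans f t -> ev f id t.
Proof. by []. Qed.


Lemma sum_cup n (s : {perm 'I_n}) (F : 'I_n -> int) (js : seq 'I_n) :
  pairwise (fun a b => [disjoint porbit s a & porbit s b]) js ->
  (\sum_(i in \bigcup_(j <- js) porbit s j) F i = \sum_(j <- js) \sum_(i in porbit s j) F i)%R.
Proof.
elim: js => [|a js IH]; first by rewrite !big_nil big_set0.
rewrite pairwise_cons => /andP[ha hp].
rewrite big_cons [in RHS]big_cons -IH //.
rewrite (eq_bigl [predU porbit s a & \bigcup_(j <- js) porbit s j]); last first.
  by move=> x; rewrite !inE.
rewrite bigU //.
rewrite bigcup_seq; apply: bigcup_disjoint => j jin.
by move/allP: ha => /(_ j jin).
Qed.

Unset Implicit Arguments.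

Theorem lemma4p22 (n : nat) (hn : (2 <= n)%N)
  (g h : X n -> X n)
  (wg : X n -> X n) (sg : {perm 'I_n}) (Hg : HS_decomp g wg sg)
  (wh : X n -> X n) (sh : {perm 'I_n}) (Hh : HS_decomp h wh sh)
  (tg : 'I_n -> int) (Htg : Hn_trans wg tg)
  (r : nat) (hr : (0 < r)%N)
  (js : seq 'I_n) (Hjs : representatives sg (Icr sg tg r) js)
  (x1 x2 : X n -> X n) (Hx1 : in_Hn x1) (Hx2 : in_Hn x2)
  (t1 t2 : 'I_n -> int) (Ht1 : Hn_trans x1 t1) (Ht2 : Hn_trans x2 t2)
  (Hc1 : forall p : X n, x1 (g p) = h (x1 p))
  (Hc2 : forall p : X n, x2 (g p) = h (x2 p)) :
  (\sum_(j <- js) t1 j = \sum_(j <- js) t2 j)%R.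
Proof.
have [_ hg] := Hg.
have evg : ev g sg tg.
  move=> i; have [z hz] := Htg i; exists z => m hm; have [e1 e2] := hz m hm.
  by rewrite hg /permX /= e1.
case: Hx2 => [[x2i K1 K2] _].
case: Hx1 => [[x1i K3 K4] _].
have evx2i : ev x2i id (fun i => - t2 i)%R.
  move=> i; have [z hz] := Ht2 i; exists (z + `|t2 i|)%N => m hm.
  pose m0 := absz (m%:Z - t2 i)%R.
  have hm0 : (z <= m0)%N by rewrite /m0; lia.
  have [e1 e2] := hz m0 hm0.
  have ex : x2 (i, m0) = (i, m).
    rewrite [x2 _]surjective_pairing e1; congr pair; move: e2; rewrite /m0; lia.
  rewrite -ex K1 /=; split => //; rewrite /m0; lia.
pose c p := x2i (x1 p).
pose tc i := (t1 i - t2 i)%R.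
have evc : ev c id tc by exact: (ev_comp Ht1 evx2i).
have cinj : injective c by move=> p q /(can_inj K2) /(can_inj K3).
have csurj q : c (x1i (x2 q)) = q by rewrite /c K4 K1.
have comm p : c (g p) = g (c p).
  by rewrite /c Hc1 -{1}(K2 (x1 p)) -Hc2 K1.
have commk k p : c (iter k g p) = iter k g (c p).
  by elim: k => //= k IH; rewrite comm IH.
pose S p := (iter r g p == p) && [forall k : 'I_r, (0 < k)%N ==> (iter k g p != p)].
have Sc p : S (c p) = S p.
  rewrite /S -commk (inj_eq cinj); congr andb; apply: eq_forallb => k.
  by rewrite -commk (inj_eq cinj).
have hrow i : exists z, forall m, (z <= m)%N -> S (i,m) = (i \in Icr sg tg r).
  have evk := ev_iter evg.
  have [zk hzk] := fin_all_exists (fun k : 'I_r.+1 => evk k i).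
  pose Z := (\max_(k : 'I_r.+1) zk k)%N.
  exists Z => m hm.
  have hit k : (k <= r)%N -> (iter k g (i,m) == (i,m)) =
      (iter k sg i == i) && (\sum_(l < k) tg (iter l sg i) == 0)%R.
    rewrite -ltnS => kr.
    have [e1 e2] := hzk (Ordinal kr) m (leq_trans (@leq_bigmax _ zk (Ordinal kr)) hm).
    rewrite [iter k g _]surjective_pairing xpair_eqE e1 /=; congr andb.
    by apply/eqP/eqP; move: e2 => /=; lia.
  rewrite /S hit //.
  rewrite (eq_forallb (P2 := fun k : 'I_r => (0 < k)%N ==>
      ~~ ((iter k sg i == i) && (\sum_(l < k) tg (iter l sg i) == 0)%R))); last first.
    by move=> k; rewrite hit // ltnW.
  rewrite /Icr /Ic !inE L6.
  apply/idP/idP.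
    move=> /andP[/andP[hr1 hr2] /forallP hk].
    have od := L4 (eqP hr1).
    case/dvdnP: (od) => q rq.
    have so0 : (\sum_(l < #|porbit sg i|) tg (iter l sg i) == 0)%R.
      move: hr2; rewrite -(big_mkord xpredT (fun l => tg (iter l sg i))) rq big_mkord L5 mulrn_eq0 => /orP[/eqP q0|//].
      by move: hr; rewrite rq q0.
    rewrite so0 /=.
    case: (ltngtP #|porbit sg i| r) => hor //.
      have := hk (Ordinal hor); rewrite /= lt0n card_porbit_neq0 /= L1 eqxx so0.
      by [].
    by have := dvdn_leq hr od; rewrite leqNgt hor.
  move=> /andP[tc0 /eqP or].
  have e1 : iter r sg i = i by rewrite -or L1.
  move: tc0; rewrite -(big_mkord xpredT (fun l => tg (iter l sg i))) or big_mkord => tc0.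
  rewrite e1 eqxx tc0 /=; apply/forallP => k; apply/implyP => k0.
  by rewrite (negbTE (L2 _)) // k0 /= or.
have fS p : S p -> S (c p) by rewrite Sc.
have fSs q : S q -> exists2 p, S p & c p = q.
  by move=> Sq; exists (x1i (x2 q)); rewrite ?csurj // -Sc csurj.
have F0 := @flux n S c (Icr sg tg r) tc cinj fS fSs hrow evc.
have tcs i : tc (sg i) = tc i.
  have [z1 h1] := ev_comp evg evc i.
  have [z2 h2] := ev_comp evc evg i.
  have [_ e1] := h1 (z1 + z2)%N (leq_addr _ _).
  have [_ e2] := h2 (z1 + z2)%N (leq_addl _ _).
  move: e1 e2; rewrite /= comm => ->; lia.
have tcorb j i : i \in porbit sg j -> tc i = tc j.
  case/porbitP => k ->; rewrite perm.permX; elim: k => //= k IH; by rewrite tcs IH.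
case: Hjs => hU hP.
rewrite hU sum_cup // in F0.
have : ((\sum_(j <- js) tc j) *+ r = 0)%R.
  rewrite -sumrMnl -[X in _ = X]F0; apply: eq_big_seq => j jin.
  have jI : j \in Icr sg tg r.
    by rewrite hU bigcup_seq; apply/bigcupP; exists j => //; exact: porbit_id.
  move: jI; rewrite inE => /andP[_ /eqP or].
  by rewrite -or -sumr_const; apply: eq_bigr => i ii; rewrite (tcorb j i).
move/eqP; rewrite mulrn_eq0 eqn0Ngt hr /= /tc sumrB subr_eq0 => /eqP //.
Qed.
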